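(* Let $G$ be a $k$-cop-win graph and let $H$ be a 1-point retract of $G$. Then for all $m\geq 1$, $H$ is $k$-cop-win and $\mathrm{capt}_k(H,m)\leq \mathrm{capt}_k(G,m)$.
   Context: All graphs are finite, simple, connected and reflexive (a player may stay in place). A homomorphism $f:G\to H$ maps vertices to vertices so that adjacent (or equal) vertices go to adjacent (or equal) vertices. An induced subgraph $H$ of $G$ is a retract if there is a homomorphism $f:G\to H$ with $f(x)=x$ for all $x\in V(H)$; if $H=G-u$ for some vertex $u$, $H$ is a 1-point retract. The game of $k$ cops and $m$ robbers on $G$: in round 0 the cops first choose starting vertices, then the robbers choose theirs. In each round $i\geq 1$, all $k$ cops move (each to an adjacent vertex or staying), then all $m$ robbers move likewise. Several players may occupy the same vertex. Whenever a cop and some robbers occupy the same vertex, those robbers are captured and take no further part in the game. Both sides have full information. The cops win if all robbers are captured after finitely many rounds. $G$ is $k$-cop-win if $k$ cops can always win against one robber. For a $k$-cop-win graph $G$, $\mathrm{capt}_k(G,m)$ is the index of the round in which the last robber is captured when $k$ cops play to minimize this index and $m$ robbers play to maximize it. *)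

(* Defs.v *)
From mathcomp Require Import all_boot.
Set Implicit Arguments. Unset Strict Implicit. Unset Printing Implicit Defensive.

(* A graph is a finType V with a symmetric irreflexive edge relation adj;
   players may move along an edge or stay (reflexive graph). *)
Definition step {V : finType} (adj : rel V) (x y : V) : bool := (x == y) || adj x y.

(* Robbers' state: Some v = active robber at v, None = captured. *)
Definition capture {V : finType} {k m : nat} (c : {ffun 'I_k -> V})
    (r : {ffun 'I_m -> option V}) : {ffun 'I_m -> option V} :=
  [ffun j => if r j is Some y then (if [exists i, c i == y] then None else Some y)
             else None].

Definition all_captured {V : finType} {m : nat} (r : {ffun 'I_m -> option V}) : bool :=
  [forall j, r j == None].

Definition cop_move {V : finType} (adj : rel V) {k : nat} (c c' : {ffun 'I_k -> V}) : bool :=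
  [forall i, step adj (c i) (c' i)].

Definition rob_move {V : finType} (adj : rel V) {m : nat}
    (r r' : {ffun 'I_m -> option V}) : bool :=
  [forall j, match r j, r' j with
             | Some y, Some y' => step adj y y'
             | None, None => true
             | _, _ => false end].

(* cops_win_within adj n c r : in the state where cops stand at c, robbers at r
   (captures already applied) and the cops are about to move, the cops can
   force that all robbers are captured within n further rounds. *)
Fixpoint cops_win_within {V : finType} (adj : rel V) {k m : nat} (n : nat)
    (c : {ffun 'I_k -> V}) (r : {ffun 'I_m -> option V}) : bool :=
  all_captured r ||
  match n with
  | 0 => false
  | n'.+1 =>
      [exists c' : {ffun 'I_k -> V}, cop_move adj c c' &&
        [forall r' : {ffun 'I_m -> option V},
           rob_move adj (capture c' r) r' ==> cops_win_within adj n' c' (capture c' r')]]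
  end.

(* k cops can guarantee that the last of m robbers is captured in a round of
   index <= n (round 0 = initial placement). *)
Definition cops_guarantee {V : finType} (adj : rel V) (k m n : nat) : bool :=
  [exists c0 : {ffun 'I_k -> V}, [forall r0 : {ffun 'I_m -> V},
     cops_win_within adj n c0 (capture c0 [ffun j => Some (r0 j)])]].

Definition k_cop_win {V : finType} (adj : rel V) (k : nat) : Prop :=
  exists n, cops_guarantee adj k 1 n.

Definition is_capt {V : finType} (adj : rel V) (k m n : nat) : Prop :=
  cops_guarantee adj k m n /\ forall n', n' < n -> ~~ cops_guarantee adj k m n'.

Definition induced_del {T : finType} (e : rel T) (u : T) : rel {x : T | x != u} :=
  fun a b => e (val a) (val b).
Arguments induced_del {T} e u.

Definition is_hom {A B : finType} (eA : rel A) (eB : rel B) (f : A -> B) : Prop :=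
  forall x y, eA x y -> f x = f y \/ eB (f x) (f y).

Definition one_point_retract {T : finType} (e : rel T) (u : T) : Prop :=
  exists f : T -> {x : T | x != u},
    is_hom e (induced_del e u) f /\ forall a : {x : T | x != u}, f (val a) = a.

(* Main.v *)
Require Import Defs.
From mathcomp Require Import all_boot.
Set Implicit Arguments. Unset Strict Implicit. Unset Printing Implicit Defensive.

Definition relR (T : finType) (u : T) (m : nat)
  (rH : {ffun 'I_m -> option {x : T | x != u}}) (rG : {ffun 'I_m -> option T}) : Prop :=
  forall j, rH j = None \/ rG j = omap val (rH j).

Lemma capture_R (T : finType) (u : T) (f : T -> {x : T | x != u})
  (retr : forall a, f (val a) = a) k m (c : {ffun 'I_k -> T}) rH rG :
  @relR T u m rH rG -> relR (capture [ffun i => f (c i)] rH) (capture c rG).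
Proof.
move=> R j; rewrite /capture !ffunE.
case: (R j) => [-> | ]; first by left.
case: (rH j) => [y|] /= ->; last by left.
case: ifP => [_ | Hn]; first by left.
case: ifP => [/existsP [i /eqP Hi] | _]; last by right.
suff : [exists i0, [ffun i1 => f (c i1)] i0 == y] by rewrite Hn.
by apply/existsP; exists i; rewrite ffunE Hi retr.
Qed.

Lemma all_captured_R (T : finType) (u : T) m rH rG :
  @relR T u m rH rG -> all_captured rG -> all_captured rH.
Proof.
move=> R /forallP A; apply/forallP => j; case: (R j) => [->|] //.
move/eqP: (A j) => ->; by case: (rH j).
Qed.

Lemma win_shadow (T : finType) (e : rel T) (u : T) (f : T -> {x : T | x != u})
  (hom : is_hom e (induced_del e u) f) (retr : forall a, f (val a) = a) k m n :
  forall (c : {ffun 'I_k -> T}) rG rH, @relR T u m rH rG ->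
  cops_win_within e n c rG ->
  cops_win_within (induced_del e u) n [ffun i => f (c i)] rH.
Proof.
elim: n => [|n IH] c rG rH R /=.
- rewrite !orbF => A; exact: all_captured_R R A.
- case/orP => [A|]; first by rewrite (all_captured_R R A).
  case/existsP => c' /andP [Hm /forallP Hw].
  apply/orP; right; apply/existsP; exists [ffun i => f (c' i)].
  apply/andP; split.
  + apply/forallP => i; rewrite !ffunE; move/forallP: Hm => /(_ i).
    rewrite /step => /orP [/eqP -> | /hom [->|->]]; by rewrite ?eqxx ?orbT.
  + apply/forallP => rH'; apply/implyP => Hr.
    set a := capture c' rG in Hw *.
    have Ra : relR (capture [ffun i => f (c' i)] rH) a := capture_R retr c' R.
    clearbody a.
    pose rG' := [ffun j => if rH' j is Some y then Some (val y) else a j].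
    have HrG : rob_move e a rG'.
      apply/forallP => j; rewrite /rG' ffunE. move/forallP: Hr => /(_ j).
      case: (Ra j) => [->|->].
      * case: (rH' j) => // _. case: (a j) => // x; by rewrite /step eqxx.
      * case: (capture _ rH j) => [y|] /=; case: (rH' j) => // y'.
    have := Hw rG'; rewrite HrG /= => W.
    have := IH c' _ _ _ W; apply; apply: (capture_R retr c').
    move=> j; rewrite /rG' ffunE; case: (rH' j) => [y|]; [right|left]; done.
Qed.

Lemma guarantee_shadow (T : finType) (e : rel T) (u : T) (f : T -> {x : T | x != u})
  (hom : is_hom e (induced_del e u) f) (retr : forall a, f (val a) = a) k m n :
  cops_guarantee e k m n -> cops_guarantee (induced_del e u) k m n.
Proof.
case/existsP => c0 /forallP H0; apply/existsP; exists [ffun i => f (c0 i)].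
apply/forallP => r0.
have W := H0 [ffun j => val (r0 j)].
apply: (win_shadow hom retr _ W); apply: (capture_R retr c0).
by move=> j; right; rewrite !ffunE.
Qed.

Theorem mainTheorem12 (T : finType) (e : rel T) (k : nat) (u : T) :
  symmetric e -> irreflexive e -> (forall x y : T, connect e x y) ->
  k_cop_win e k ->
  one_point_retract e u ->
  k_cop_win (induced_del e u) k /\
  (forall m : nat, 0 < m -> forall nG : nat, is_capt e k m nG ->
     exists2 nH : nat, is_capt (induced_del e u) k m nH & nH <= nG).
Proof.
move=> _ _ _ [n Hn] [f [hom retr]]; split.
  by exists n; exact: (guarantee_shadow hom retr Hn).
move=> m _ nG [HG _].
have HH := guarantee_shadow hom retr HG.
have ex : exists n, cops_guarantee (induced_del e u) k m n by exists nG.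
exists (ex_minn ex); last by case: ex_minnP => n' _ /(_ _ HH).
case: ex_minnP => n' Hn' Hmin; split => // n'' Hlt; apply/negP => Hc.
by have := Hmin _ Hc; rewrite leqNgt Hlt.
Qed.
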